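(* Let $L\subseteq\Sigma^*$ be a regular language with $\kappa(L)=n\ge 2$. Then: 1. $\kappa({}_{\le}L)\le n$; 2. $\kappa({}_{\preceq}L)\le 2^n-1$ if $\emptyset$ is not a quotient of $L$, and $\kappa({}_{\preceq}L)\le 2^{n-1}$ if $\emptyset$ is a quotient of $L$; 3. $\kappa({}_{\sqsubseteq}L)\le 2^{n-1}$; 4. $\kappa({}_{\Subset}L)\le 2^{n-2}+1$. Moreover, the bounds are tight. For every $n\ge 2$ and every alphabet with $|\Sigma|\ge 2$: - there is a regular $L$ over $\Sigma$ with $\kappa(L)=n$ and $\kappa({}_{\le}L)=n$; - there is a regular $L$ over $\Sigma$ with $\kappa(L)=n$, without $\emptyset$ as a quotient, and with $\kappa({}_{\preceq}L)=2^n-1$; - there is a regular $L$ over $\Sigma$ with $\kappa(L)=n$, with $\emptyset$ as a quotient, and with $\kappa({}_{\preceq}L)=2^{n-1}$; - there is a regular $L$ over $\Sigma$ with $\kappa(L)=n$ and $\kappa({}_{\sqsubseteq}L)=2^{n-1}$. For every $n\ge 2$ and every alphabet with $|\Sigma|\ge \max(n-2,2)$, there is a regular $L$ over $\Sigma$ with $\kappa(L)=n$ and $\kappa({}_{\Subset}L)=2^{n-2}+1$.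
   Context: $\Sigma$ is a finite non-empty alphabet. For a language $L\subseteq\Sigma^*$ and a word $w$, the (left) quotient of $L$ by $w$ is $L_w=\{x\in\Sigma^*\mid wx\in L\}$. The quotient complexity $\kappa(L)$ is the number of distinct quotients of $L$; for regular $L$ it equals the number of states of the minimal complete DFA for $L$. We say $L$ ''has $\emptyset$'' if $\emptyset$ is one of its quotients. A word $u$ is a prefix (suffix, factor) of $w$ if $w=ux$ ($w=xu$, $w=xuy$) for some words $x,y$. A word $a_1\cdots a_n$ with letters $a_i$ is a subword of $w$ if $w=w_0a_1w_1\cdots a_nw_n$ for some words $w_i$, i.e. a subword is a not necessarily contiguous subsequence. We write $x\le w$, $x\preceq w$, $x\sqsubseteq w$, $x\Subset w$ for ''$x$ is a prefix / suffix / factor / subword of $w$'', respectively. For such a relation $\unlhd$, the $\unlhd$-closure of $L$ is ${}_{\unlhd}L=\{x\in\Sigma^*\mid x\unlhd w \text{ for some } w\in L\}$. *)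

(* Defs.v *)
From mathcomp Require Import all_boot.
Set Implicit Arguments. Unset Strict Implicit. Unset Printing Implicit Defensive.

Definition lang (S : finType) := seq S -> Prop.

Definition lang_eq (S : finType) (L1 L2 : lang S) : Prop :=
  forall x, L1 x <-> L2 x.

Definition quot (S : finType) (L : lang S) (w : seq S) : lang S :=
  fun x => L (w ++ x).

Definition regular (S : finType) (L : lang S) : Prop :=
  exists (Q : finType) (d : Q -> S -> Q) (q0 : Q) (F : pred Q),
    forall w, L w <-> foldl d q0 w \in F.

(* kappa L = n : L has exactly n distinct quotients, i.e. there are words
   w_0,...,w_{n-1} whose quotients are pairwise distinct and every quotient
   of L equals one of them. *)
Definition has_kappa (S : finType) (L : lang S) (n : nat) : Prop :=
  exists ws : seq (seq S),
    [/\ size ws = n,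
        (forall i j, i < n -> j < n -> i <> j ->
           ~ lang_eq (quot L (nth [::] ws i)) (quot L (nth [::] ws j)))
      & (forall w, exists2 i, i < n &
           lang_eq (quot L w) (quot L (nth [::] ws i)))].

Definition has_empty (S : finType) (L : lang S) : Prop :=
  exists w, forall x, ~ quot L w x.

Definition closure (S : finType) (r : seq S -> seq S -> bool) (L : lang S)
  : lang S := fun x => exists w, L w /\ r x w.

Definition prefix_closure (S : finType) (L : lang S) := closure (@prefix S) L.
Definition suffix_closure (S : finType) (L : lang S) := closure (@suffix S) L.
Definition factor_closure (S : finType) (L : lang S) := closure (@infix S) L.
Definition subword_closure (S : finType) (L : lang S) := closure (@subseq S) L.

(* Main.v *)
Require Import Defs.
From mathcomp Require Import all_boot.
From Stdlib Require Import ClassicalEpsilon Classical Setoid Lia.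
Set Implicit Arguments. Unset Strict Implicit. Unset Printing Implicit Defensive.


Definition pb (P : Prop) : bool :=
  if excluded_middle_informative P then true else false.
Lemma pbP (P : Prop) : reflect P (pb P).
Proof. rewrite /pb; case: excluded_middle_informative => H; by constructor. Qed.

Section Gen.
Variable S : finType.
Implicit Types (L : lang S) (w v x y u : seq S).

Lemma leq_refl' L w : lang_eq (quot L w) (quot L w).
Proof. by move=> z. Qed.
Lemma leq_sym' L w v : lang_eq (quot L w) (quot L v) -> lang_eq (quot L v) (quot L w).
Proof. by move=> H z; split => /H. Qed.
Lemma leq_trans' L w v u : lang_eq (quot L w) (quot L v) -> lang_eq (quot L v) (quot L u) ->
  lang_eq (quot L w) (quot L u).
Proof. by move=> H1 H2 z; split => [/H1/H2|/H2/H1]. Qed.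

Lemma dedup_quot L (l : seq (seq S)) : exists l' : seq (seq S),
  [/\ size l' <= size l,
      (forall i j, i < size l' -> j < size l' -> i <> j ->
         ~ lang_eq (quot L (nth [::] l' i)) (quot L (nth [::] l' j)))
    & (forall v, v \in l -> exists2 v', v' \in l' & lang_eq (quot L v) (quot L v'))].
Proof.
elim: l => [|x r [r' [Hs Hd Hc]]]; first by exists [::]; split.
case: (classic (exists2 v', v' \in r' & lang_eq (quot L x) (quot L v'))) => [Hx|Hx].
  exists r'; split => //; first exact: leqW.
  by move=> v; rewrite inE => /orP [/eqP->|/Hc].
exists (x :: r'); split => //.
- move=> [|i] [|j] //= Hi Hj Hij Heq.
  + by apply: Hx; exists (nth [::] r' j); first exact: mem_nth.
  + by apply: Hx; exists (nth [::] r' i); [exact: mem_nth | exact: leq_sym'].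
  + by apply: (Hd i j) => // E; apply: Hij; rewrite E.
- move=> v; rewrite inE => /orP [/eqP->|/Hc [v' H1 H2]].
    by exists x; [rewrite mem_head | exact: leq_refl'].
  by exists v'; [rewrite inE H1 orbT|].
Qed.

Lemma kappa_le_list L (l : seq (seq S)) :
  (forall w, exists2 v, v \in l & lang_eq (quot L w) (quot L v)) ->
  exists2 m, has_kappa L m & m <= size l.
Proof.
move=> Hcov; have [l' [Hs Hd Hc]] := dedup_quot L l.
exists (size l') => //; exists l'; split => // w.
have [v Hv Hwv] := Hcov w; have [v' Hv' Hvv'] := Hc v Hv.
exists (index v' l'); first by rewrite index_mem.
by rewrite nth_index //; apply: leq_trans' Hwv Hvv'.
Qed.

Lemma kappa_le_card L (T : finType) (h : seq S -> T) (A : {set T}) :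
  (forall w, h w \in A) -> (forall w v, h w = h v -> lang_eq (quot L w) (quot L v)) ->
  exists2 m, has_kappa L m & m <= #|A|.
Proof.
move=> HA Hh.
pose rep (t : T) : option (seq S) :=
  match excluded_middle_informative (exists w, h w = t) with
  | left H => Some (proj1_sig (constructive_indefinite_description _ H))
  | right _ => None end.
suff [m Hm Hle] : exists2 m, has_kappa L m & m <= size (pmap rep (enum A)).
  exists m => //; apply: leq_trans Hle _; rewrite cardE size_pmap; exact: count_size.
apply: kappa_le_list => w.
have : exists2 v, rep (h w) = Some v & h v = h w.
  rewrite /rep; case: excluded_middle_informative => [H|H]; last by exfalso; apply: H; exists w.
  by case: (constructive_indefinite_description _ H) => v /= Hv; exists v.
case=> v Hr Hv; exists v; last by apply: Hh.
by rewrite mem_pmap -Hr map_f // mem_enum.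
Qed.

Lemma kappa_ge L m (T : finType) (A : {set T}) (f : T -> seq S) :
  has_kappa L m ->
  (forall a b : T, a \in A -> b \in A -> a <> b -> ~ lang_eq (quot L (f a)) (quot L (f b))) ->
  #|A| <= m.
Proof.
move=> [ws [Hs Hd Hc]] Hf.
have G : forall a : T, {i : 'I_m | lang_eq (quot L (f a)) (quot L (nth [::] ws i))}.
  move=> a; apply: constructive_indefinite_description.
  by have [i Hi Heq] := Hc (f a); exists (Ordinal Hi).
pose g a := proj1_sig (G a).
have inj : {in A &, injective g}.
  move=> a b Hx Hy Hg; case: (eqVneq a b) => // /eqP Hne; exfalso.
  apply: (Hf a b Hx Hy Hne).
  have Hx' := proj2_sig (G a); have Hy' := proj2_sig (G b).
  rewrite -/(g a) -/(g b) Hg in Hx' Hy'.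
  exact: leq_trans' Hx' (leq_sym' Hy').
by rewrite -(card_in_imset inj); apply: leq_trans (max_card _) _; rewrite card_ord.
Qed.

Lemma has_kappa_ext (L1 L2 : lang S) n : (forall x, L1 x <-> L2 x) ->
  has_kappa L1 n -> has_kappa L2 n.
Proof.
move=> E [ws [Hs Hd Hc]]; exists ws; split => //.
- move=> i j Hi Hj Hij Heq; apply: (Hd i j Hi Hj Hij) => z.
  by rewrite /quot; split => /E/Heq/E.
- move=> w; have [i Hi H] := Hc w; exists i => // z.
  by rewrite /quot; split => /E/H/E.
Qed.

Lemma kappa_exact L m B : has_kappa L m -> m <= B -> B <= m -> has_kappa L B.
Proof. by move=> H h1 h2; have -> : B = m by apply/eqP; rewrite eqn_leq h1 h2. Qed.

Lemma dfa_kappa (Q : finType) (d : Q -> S -> Q) (q0 : Q) (F : pred Q) L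
  (HL : forall w, L w <-> foldl d q0 w \in F) (f : Q -> seq S)
  (reach : forall q, foldl d q0 (f q) = q)
  (dist : forall p q, p <> q -> exists y, (foldl d p y \in F) != (foldl d q y \in F)) :
  has_kappa L #|Q|.
Proof.
have qE : forall w y, quot L w y <-> foldl d (foldl d q0 w) y \in F.
  by move=> w y; rewrite /quot -foldl_cat; exact: HL.
have [m Hm Hle] : exists2 m, has_kappa L m & m <= #|[set: Q]|.
  apply: (@kappa_le_card L Q (foldl d q0) setT (fun _ => in_setT _)).
  by move=> w v E z; rewrite !qE E.
apply (kappa_exact Hm); first by rewrite cardsT in Hle.
rewrite -cardsT; apply: (kappa_ge (f := f) Hm) => p q _ _ Hpq Heq.
have [y Hy] := dist p q Hpq; move: (Heq y); rewrite !qE !reach.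
by case: (foldl d p y \in F) (foldl d q y \in F) Hy => [] [] // _ [H1 H2];
  [have := H1 isT | have := H2 isT].
Qed.

End Gen.


Section Chars.
Variable S : finType.
Implicit Types (L : lang S) (w v x y u z : seq S).

Lemma pc_char L x : prefix_closure L x <-> exists u, L (x ++ u).
Proof.
rewrite /prefix_closure; split => [[z [Hz /prefixP [u E]]]|[u Hu]].
  by exists u; rewrite -E.
by exists (x ++ u); split => //; apply/prefixP; exists u.
Qed.

Lemma sc_char L x : suffix_closure L x <-> exists u, L (u ++ x).
Proof.
rewrite /suffix_closure; split => [[z [Hz /suffixP [u E]]]|[u Hu]].
  by exists u; rewrite -E.
by exists (u ++ x); split => //; apply/suffixP; exists u.
Qed.

Lemma fc_char L x : factor_closure L x <-> exists u v, L (u ++ x ++ v).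
Proof.
rewrite /factor_closure; split => [[z [Hz /infixP [u [v E]]]]|[u [v Hu]]].
  by exists u, v; rewrite -E.
by exists (u ++ x ++ v); split => //; apply/infixP; exists u, v.
Qed.

Lemma swc_char L x : subword_closure L x <-> exists z, L z /\ subseq x z.
Proof. by []. Qed.

Lemma subseq_cat_split (s1 s2 z : seq S) : subseq (s1 ++ s2) z ->
  exists z1 z2, [/\ z = z1 ++ z2, subseq s1 z1 & subseq s2 z2].
Proof.
elim: z s1 => [|c z IH] s1.
  case: s1 => [|a s1] //= /eqP ->; by exists [::], [::].
case: s1 => [|a s1] /=.
  by move=> H; exists [::], (c :: z).
case: eqP => [<-|Hac] H.
  have [z1 [z2 [-> H1 H2]]] := IH s1 H; exists (a :: z1), z2; split => //=.
  by rewrite eqxx.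
have [z1 [z2 [-> H1 H2]]] := IH (a :: s1) H; exists (c :: z1), z2; split => //=.
by case: eqP.
Qed.

End Chars.


Section Canon.
Variables (S : finType) (L : lang S) (n : nat) (ws : seq (seq S)).
Hypothesis Hd : forall i j, i < n -> j < n -> i <> j ->
  ~ lang_eq (quot L (nth [::] ws i)) (quot L (nth [::] ws j)).
Hypothesis Hc : forall w, exists2 i, i < n & lang_eq (quot L w) (quot L (nth [::] ws i)).
Implicit Types (w v x y u z : seq S).

Definition Gsig w : {i : nat | i < n /\ lang_eq (quot L w) (quot L (nth [::] ws i))}.
Proof. apply: constructive_indefinite_description; by have [i Hi H] := Hc w; exists i. Defined.

Definition G w : 'I_n := Ordinal (proj1 (proj2_sig (Gsig w))).
Local Notation W i := (nth [::] ws i).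

Lemma G_eq w : lang_eq (quot L w) (quot L (W (G w))).
Proof. exact: (proj2 (proj2_sig (Gsig w))). Qed.

Lemma G_uniq w (i : 'I_n) : lang_eq (quot L w) (quot L (W i)) -> G w = i.
Proof.
move=> H; apply/val_inj => /=; case: (eqVneq (G w : nat) i) => // /eqP Hne; exfalso.
apply: (Hd (ltn_ord (G w)) (ltn_ord i) Hne).
exact: leq_trans' (leq_sym' (G_eq w)) H.
Qed.

Lemma G_E w v : G w = G v <-> lang_eq (quot L w) (quot L v).
Proof.
split => [E|E].
  by apply: leq_trans' (G_eq w) _; rewrite E; exact: leq_sym' (G_eq v).
by apply: G_uniq; exact: leq_trans' E (G_eq v).
Qed.

Lemma G_cat w v u : G w = G v -> G (w ++ u) = G (v ++ u).
Proof. by move/G_E => H; apply/G_E => z; rewrite /quot -!catA; exact: H. Qed.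

Lemma G_W (i : 'I_n) : G (W i) = i.
Proof. by apply: G_uniq; exact: leq_refl'. Qed.

Lemma LG u z : L (u ++ z) <-> L (W (G u) ++ z).
Proof. exact: G_eq. Qed.

Lemma LGi u i z : G u = i -> (L (u ++ z) <-> L (W i ++ z)).
Proof. by move=> <-; exact: LG. Qed.

Lemma ub_prefix : exists2 m, has_kappa (prefix_closure L) m & m <= n.
Proof.
suff [m Hm Hle] : exists2 m, has_kappa (prefix_closure L) m & m <= #|[set: 'I_n]|.
  by exists m; rewrite // cardsT card_ord in Hle.
apply: (kappa_le_card (h := G)) => // w v /G_E E z; rewrite /quot !pc_char.
by split => [[u Hu]|[u Hu]]; exists u; move: Hu; rewrite -!catA; apply E.
Qed.

Definition P w := [set i | pb (exists u, G (u ++ w) = i)].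

Lemma sc_quot w y : quot (suffix_closure L) w y <-> exists2 i, i \in P w & L (W i ++ y).
Proof.
rewrite /quot sc_char; split => [[u Hu]|[i]].
  exists (G (u ++ w)); first by rewrite inE; apply/pbP; exists u.
  by apply/(LG (u ++ w) y); rewrite -catA.
rewrite inE => /pbP [u Hu] H; exists u; rewrite catA; exact/(LGi _ Hu).
Qed.

Lemma P_ne w : G w \in P w.
Proof. by rewrite inE; apply/pbP; exists [::]. Qed.

Lemma ub_suffix_ne : exists2 m, has_kappa (suffix_closure L) m & m <= 2 ^ n - 1.
Proof.
suff [m Hm Hle] : exists2 m, has_kappa (suffix_closure L) m & m <= #|[set: {set 'I_n}] :\ set0|.
  exists m => //; apply: leq_trans Hle _.
  have E2 : #|[set: {set 'I_n}]| = 2 ^ n.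
    by rewrite -powersetT card_powerset cardsT card_ord.
  have := cardsD1 set0 [set: {set 'I_n}].
  by rewrite E2 in_setT add1n => ->; rewrite subn1.
apply: (kappa_le_card (h := P)).
  move=> w; rewrite !inE andbT; apply/set0Pn; exists (G w); exact: P_ne.
by move=> w v E z; rewrite !sc_quot E.
Qed.

Lemma dead_G e0 : (forall x, ~ quot L e0 x) -> forall w, G (e0 ++ w) = G e0.
Proof.
move=> He w; apply/G_E => z; rewrite /quot -catA; split => H; exfalso.
  exact: He H.
exact: He H.
Qed.

Lemma card_D1 (i : 'I_n) : #|[set: 'I_n] :\ i| = n.-1.
Proof.
have H := cardsD1 i [set: 'I_n]; rewrite in_setT cardsT card_ord add1n in H.
by rewrite [in RHS]H.
Qed.

Lemma ub_suffix_e : has_empty L ->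
  exists2 m, has_kappa (suffix_closure L) m & m <= 2 ^ n.-1.
Proof.
move=> [e0 He]; set E := G e0.
have EP : forall w, E \in P w.
  by move=> w; rewrite inE; apply/pbP; exists e0; exact: dead_G.
suff [m Hm Hle] : exists2 m, has_kappa (suffix_closure L) m &
                   m <= #|powerset ([set: 'I_n] :\ E)|.
  by exists m; rewrite // card_powerset card_D1 in Hle.
apply: (kappa_le_card (h := fun w => P w :\ E)).
  by move=> w; rewrite powersetE; apply: setSD; exact: subsetT.
move=> w v H z; rewrite !sc_quot.
by rewrite -(setD1K (EP w)) -(setD1K (EP v)) H.
Qed.


Definition Live := [set i : 'I_n | pb (exists v, L (W i ++ v))].

Lemma unit_bound (L' : lang S) : (forall x, L' x) -> exists2 m, has_kappa L' m & m <= 1.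
Proof.
move=> H.
suff [m Hm Hle] : exists2 m, has_kappa L' m & m <= #|[set: unit]|.
  by exists m; rewrite // cardsT card_unit in Hle.
apply: (kappa_le_card (h := fun _ => tt)) => // w v _ z; split => _; exact: H.
Qed.

Lemma dead_or_live : (forall w, exists v, L (w ++ v)) \/
  exists e0, (forall x, ~ quot L e0 x) /\ G e0 \notin Live.
Proof.
case: (classic (forall w, exists v, L (w ++ v))) => [H|H]; first by left.
right; have [e0 He] := not_all_ex_not _ _ H.
have He' : forall x, ~ quot L e0 x by move=> x Hx; apply: He; exists x.
exists e0; split => //; rewrite inE; apply/pbP => [[v Hv]].
by apply: (He' v); apply/LG.
Qed.

Lemma ub_factor : 0 < n -> exists2 m, has_kappa (factor_closure L) m & m <= 2 ^ n.-1.
Proof.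
move=> n0; case: dead_or_live => [Hl|[e0 [He HE]]].
  have [m Hm Hle] : exists2 m, has_kappa (factor_closure L) m & m <= 1.
    by apply: unit_bound => x; apply/fc_char; have [v Hv] := Hl x; exists [::], v.
  by exists m => //; apply: leq_trans Hle _; rewrite expn_gt0.
suff [m Hm Hle] : exists2 m, has_kappa (factor_closure L) m &
                   m <= #|powerset ([set: 'I_n] :\ G e0)|.
  by exists m; rewrite // card_powerset card_D1 in Hle.
apply: (kappa_le_card (h := fun w => P w :&: Live)).
  move=> w; rewrite powersetE; apply/subsetP => i; rewrite !inE => /andP [_ Hi].
  rewrite andbT; apply/eqP => Ei; move/negP: HE; apply.
  by rewrite -Ei inE.
suff Q : forall w y, quot (factor_closure L) w y <->
   exists2 i, i \in P w :&: Live & exists v, L (W i ++ y ++ v).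
  by move=> w v H z; rewrite !Q H.
move=> w y; rewrite /quot fc_char; split => [[u [v Huv]]|[i]].
  exists (G (u ++ w)).
    rewrite !inE; apply/andP; split; apply/pbP; first by exists u.
    by exists (y ++ v); apply/(LG (u ++ w)); move: Huv; rewrite -!catA.
  by exists v; apply/(LG (u ++ w)); move: Huv; rewrite -!catA.
rewrite !inE => /andP [/pbP [u Hu] _] [v Hv]; exists u, v.
by rewrite -catA catA; apply/(LGi (y ++ v) Hu).
Qed.

Definition H w := [set i : 'I_n | pb (exists z1, subseq w z1 /\ G z1 = i)].

Lemma swc_quot w y : quot (subword_closure L) w y <->
  exists2 i, i \in H w :&: Live & exists z2, subseq y z2 /\ L (W i ++ z2).
Proof.
rewrite /quot swc_char; split => [[z [Hz Hs]]|[i]].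
  have [z1 [z2 [Ez H1 H2]]] := subseq_cat_split Hs.
  have HL : L (W (G z1) ++ z2) by apply/(LG z1 z2); rewrite -Ez.
  exists (G z1); last by exists z2.
  by rewrite !inE; apply/andP; split; apply/pbP; [exists z1 | exists z2].
rewrite !inE => /andP [/pbP [z1 [Hs1 Hz1]] _] [z2 [Hs2 HL]].
by exists (z1 ++ z2); split; [apply/(LGi z2 Hz1) | exact: cat_subseq].
Qed.

Lemma H_full w : G [::] \in H w -> H w = setT.
Proof.
rewrite inE => /pbP [z1 [Hs Hz]]; apply/setP => i; rewrite !inE; apply/pbP.
exists (z1 ++ W i); split; first exact: subseq_trans Hs (prefix_subseq _ _).
by rewrite (G_cat _ Hz) /= G_W.
Qed.

Lemma ub_subword : 1 < n ->
  exists2 m, has_kappa (subword_closure L) m & m <= 2 ^ (n - 2) + 1.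
Proof.
move=> n2; case: dead_or_live => [Hl|[e0 [He HE]]].
  have [m Hm Hle] : exists2 m, has_kappa (subword_closure L) m & m <= 1.
    apply: unit_bound => x; apply/swc_char; have [v Hv] := Hl x.
    by exists (x ++ v); split => //; exact: prefix_subseq.
  by exists m => //; apply: leq_trans Hle _; rewrite addn1 ltnS.
set q0 := G [::].
have q0L : q0 \in Live.
  rewrite inE; apply/pbP; apply: NNPP => Hn.
  have N : forall v, ~ L v by move=> v Hv; apply: Hn; exists v; exact: (proj1 (LG [::] v) Hv).
  apply: (Hd (i := 0) (j := 1)) => // [|z]; first exact: ltnW.
  by split => /N.
have cL : #|Live :\ q0| <= n - 2.
  have : Live \subset [set: 'I_n] :\ G e0.
    apply/subsetP => i Hi; rewrite !inE andbT; apply/eqP => Ei; move/negP: HE; apply.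
    by rewrite -Ei.
  all: try by rewrite inE.
  move/subset_leq_card; rewrite card_D1 (cardsD1 q0 Live) q0L add1n.
  move: n2 => /ltP H1 /ltP H2; apply/leP; rewrite -subn1 in H2.
  rewrite -!minusE in H2 *; lia.
suff [m Hm Hle] : exists2 m, has_kappa (subword_closure L) m &
                   m <= #|[set: 'I_n] |: powerset (Live :\ q0)|.
  exists m => //; apply: leq_trans Hle _; rewrite cardsU1 card_powerset addnC.
  apply: leq_add; last by case: (_ \notin _).
  by rewrite leq_pexp2l.
pose h w := if q0 \in H w then [set: 'I_n] else H w :&: Live.
have hK : forall w, H w :&: Live = h w :&: Live.
  by move=> w; rewrite /h; case: ifP => [/H_full ->|_] //; rewrite -setIA setIid.
apply: (kappa_le_card (h := h)).
  move=> w; rewrite /h; case: ifP => Hq; first by rewrite setU11.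
  rewrite !inE; apply/orP; right; apply/subsetP => i.
  rewrite !inE => /andP [Hi ->]; rewrite andbT; apply/eqP => Ei.
  by move: Hq; rewrite -Ei inE Hi.
by move=> w v E' z; rewrite !swc_quot hK E' -hK.
Qed.

End Canon.

Section Wrap.
Variables (S : finType) (L : lang S) (n : nat).

Lemma UB_prefix : has_kappa L n -> exists2 m, has_kappa (prefix_closure L) m & m <= n.
Proof. by move=> [ws [Hs Hd Hc]]; first [exact: (ub_prefix Hd Hc) | exact: (ub_prefix Hc) | exact: (ub_prefix _ Hc) ]. Qed.
Lemma UB_suffix_ne : has_kappa L n ->
  exists2 m, has_kappa (suffix_closure L) m & m <= 2 ^ n - 1.
Proof. by move=> [ws [Hs Hd Hc]]; first [exact: (ub_suffix_ne Hd Hc) | exact: (ub_suffix_ne Hc) | exact: (ub_suffix_ne _ Hc) ]. Qed.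
Lemma UB_suffix_e : has_kappa L n -> has_empty L ->
  exists2 m, has_kappa (suffix_closure L) m & m <= 2 ^ n.-1.
Proof. by move=> [ws [Hs Hd Hc]]; first [exact: (ub_suffix_e Hd Hc) | exact: (ub_suffix_e Hc) | exact: (ub_suffix_e _ Hc) ]. Qed.
Lemma UB_factor : 0 < n -> has_kappa L n ->
  exists2 m, has_kappa (factor_closure L) m & m <= 2 ^ n.-1.
Proof. by move=> n0 [ws [Hs Hd Hc]]; first [exact: (ub_factor Hd Hc) | exact: (ub_factor Hc) | exact: (ub_factor _ Hc) ]. Qed.
Lemma UB_subword : 1 < n -> has_kappa L n ->
  exists2 m, has_kappa (subword_closure L) m & m <= 2 ^ (n - 2) + 1.
Proof. by move=> n1 [ws [Hs Hd Hc]]; first [exact: (ub_subword Hd Hc) | exact: (ub_subword Hc) | exact: (ub_subword _ Hc) ]. Qed.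
End Wrap.


Section Rot.
Variables (m : nat) (m0 : 0 < m).

Definition rotk (k : nat) (i : 'I_m) : 'I_m := Ordinal (ltn_pmod (i + k) m0).

Lemma rotkS k i : rotk k (rotk 1 i) = rotk k.+1 i.
Proof. by apply/val_inj => /=; rewrite modnDml -addnA add1n. Qed.

Lemma rotkS' k i : rotk 1 (rotk k i) = rotk k.+1 i.
Proof. by apply/val_inj => /=; rewrite modnDml addn1 addnS. Qed.

Lemma rotk0 i : rotk 0 i = i.
Proof. by apply/val_inj => /=; rewrite addn0 modn_small. Qed.

Lemma rot_back (r s : 'I_m) : rotk s (rotk (m - s) r) = r.
Proof.
apply/val_inj => /=; rewrite modnDml -addnA subnK; last exact: ltnW.
by rewrite modnDr modn_small.
Qed.

Lemma rot_zero (r s : 'I_m) : (val (rotk (m - s) r) == 0) = (r == s).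
Proof.
rewrite /=; case: (ltngtP r s) => [lt|gt|eq].
- have Hs := ltn_ord s.
  rewrite modn_small; last by move: lt Hs => /ltP ? /ltP ?; apply/ltP; rewrite -minusE -plusE; lia.
  have -> : (r == s) = false by apply/negbTE; rewrite neq_ltn lt.
  by apply/negbTE; move: lt Hs => /ltP ? /ltP ?; apply/eqP; rewrite -minusE -plusE; lia.
- have Hr := ltn_ord r; have Hs := ltn_ord s.
  have -> : r + (m - s) = (r - s) + m.
    by move: gt Hs => /ltP ? /ltP ?; rewrite -!minusE -!plusE; lia.
  rewrite modnDr modn_small; last by move: Hr => /ltP ?; apply/ltP; rewrite -minusE; lia.
  have -> : (r == s) = false by apply/negbTE; rewrite neq_ltn gt orbT.
  by apply/negbTE; move: gt => /ltP ?; apply/eqP; rewrite -minusE; lia.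
- have -> : r = s by apply/val_inj.
  by rewrite eqxx subnKC ?modnn // ltnW.
Qed.

End Rot.

Section DFAgen.
Variables (S Q : finType) (d : Q -> S -> Q) (q0 : Q) (F : pred Q) (f : Q -> seq S).
Hypothesis reach : forall q, foldl d q0 (f q) = q.
Definition LD : lang S := fun w => foldl d q0 w \in F.

Lemma regular_LD : regular LD.
Proof. by exists Q, d, q0, F. Qed.

Lemma sc_dfa w y : quot (suffix_closure LD) w y <-> exists s, foldl d (foldl d s w) y \in F.
Proof.
rewrite /quot sc_char /LD; split => [[u Hu]|[s Hs]].
  by exists (foldl d q0 u); rewrite -!foldl_cat.
by exists (f s); rewrite !foldl_cat reach.
Qed.

Lemma fc_dfa w y : quot (factor_closure LD) w y <->
  exists s v, foldl d (foldl d s w) (y ++ v) \in F.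
Proof.
rewrite /quot fc_char /LD; split => [[u [v Hu]]|[s [v Hs]]].
  by exists (foldl d q0 u), v; rewrite -!foldl_cat; move: Hu; rewrite -!catA.
by exists (f s), v; rewrite -catA !foldl_cat reach -foldl_cat.
Qed.

Lemma dist_sig (sp : Q) :
  (forall q, q != sp -> exists y, forall s, (foldl d s y \in F) = (s == q)) ->
  forall p q, p <> q -> exists y, (foldl d p y \in F) != (foldl d q y \in F).
Proof.
move=> Hs p q Hpq; case: (eqVneq p sp) => [Ep|Np].
  have Nq : q != sp by apply/eqP => Eq; apply: Hpq; rewrite Ep Eq.
  have [y Hy] := Hs q Nq; exists y; rewrite !Hy eqxx.
  by case: (eqVneq q p) => // E; exfalso; apply: Hpq.
have [y Hy] := Hs p Np; exists y; rewrite !Hy eqxx.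
by case: (eqVneq q p) => // E; exfalso; apply: Hpq.
Qed.
End DFAgen.

Lemma sets_dist (S : finType) (L : lang S) (T : finType) (f : {set T} -> seq S)
  (yt : T -> seq S) (Hy : forall X t, quot L (f X) (yt t) <-> t \in X) :
  forall X Y, X <> Y -> ~ lang_eq (quot L (f X)) (quot L (f Y)).
Proof.
move=> X Y HXY Heq; apply: HXY; apply/setP => t.
apply/idP/idP => H.
  by apply/Hy; apply/Heq; apply/Hy.
by apply/Hy; apply/Heq; apply/Hy.
Qed.

Section FW.
Variables (S : finType) (a b : S) (ab : a != b) (m : nat) (m0 : 0 < m).
Local Notation rot := (rotk m0).
Definition i0 : 'I_m := Ordinal m0.
Definition dF (s : option 'I_m) (c : S) : option 'I_m :=
  if s is Some i then (if c == b then (if val i == 0 then None else Some i)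
                       else Some (rot 1 i)) else None.
Definition FF : pred (option 'I_m) := [pred s | s == Some i0].
Definition fF (q : option 'I_m) : seq S := if q is Some i then nseq i a else [:: b].
Definition LF := LD dF (Some i0) FF.

Lemma runNone w : foldl dF None w = None.
Proof. by elim: w. Qed.

Lemma run_a k i : foldl dF (Some i) (nseq k a) = Some (rot k i).
Proof.
elim: k i => [|k IH] i /=; first by rewrite rotk0.
by rewrite (negbTE ab) IH rotkS.
Qed.

Lemma reachF q : foldl dF (Some i0) (fF q) = q.
Proof.
case: q => [i|] /=; last by rewrite eqxx.
by rewrite run_a; congr Some; apply/val_inj; rewrite /= add0n modn_small.
Qed.

Definition kill (s : 'I_m) : seq S := nseq (m - s) a ++ b :: nseq s a.

Lemma run_kill r s : foldl dF (Some r) (kill s) = if r == s then None else Some r.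
Proof.
rewrite /kill foldl_cat run_a /= eqxx (rot_zero m0).
by case: eqP => _; rewrite ?runNone // run_a (rot_back m0).
Qed.

Definition kills (l : seq 'I_m) : seq S := flatten (map kill l).

Lemma run_kills r l : foldl dF (Some r) (kills l) = if r \in l then None else Some r.
Proof.
elim: l => [|s l IH] //=; rewrite foldl_cat run_kill inE.
by case: eqP => _ /=; rewrite ?runNone.
Qed.

Lemma acc_a (i : 'I_m) s : (foldl dF s (nseq (m - i) a) \in FF) = (s == Some i).
Proof.
case: s => [r|]; last by rewrite runNone.
rewrite run_a /FF /= inE /=; apply/eqP/eqP => [E|[->]].
  congr Some; apply/eqP; rewrite -rot_zero; move: E => [<-] //.
by congr Some; apply/val_inj; rewrite /= subnKC ?modnn // ltnW.
Qed.

Lemma kappa_LF : has_kappa LF m.+1.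
Proof.
have -> : m.+1 = #|{: option 'I_m}| by rewrite card_option card_ord.
apply: (@dfa_kappa _ _ dF (Some i0) FF LF (fun w => iff_refl _) fF reachF).
apply: (dist_sig (sp := None)) => [[i|]] // _; exists (nseq (m - i) a) => s.
exact: acc_a.
Qed.

Lemma LF_empty : has_empty LF.
Proof. by exists [:: b] => x; rewrite /quot /LF /LD /= eqxx runNone. Qed.

Definition fX (X : {set 'I_m}) : seq S := kills (enum (~: X)).

Lemma run_fX r X : foldl dF (Some r) (fX X) = if r \in X then Some r else None.
Proof. by rewrite run_kills mem_enum inE; case: (r \in X). Qed.

Lemma sc_LF X (t : 'I_m) : quot (suffix_closure LF) (fX X) (nseq (m - t) a) <-> t \in X.
Proof.
rewrite (@sc_dfa _ _ dF (Some i0) FF fF reachF); split => [[[r|]]|Ht]; last first.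
  by exists (Some t); rewrite run_fX Ht acc_a.
  by rewrite !runNone inE.
rewrite run_fX; case: ifP => Hr; last by rewrite runNone inE.
by rewrite acc_a => /eqP [<-].
Qed.

Lemma fc_LF X (t : 'I_m) : quot (factor_closure LF) (fX X) (kills (enum [set~ t]) ++ nseq (m - t) a)
  <-> t \in X.
Proof.
rewrite (@fc_dfa _ _ dF (Some i0) FF fF reachF); split => [[[r|] [v]]|Ht]; last first.
- exists (Some t), [::]; rewrite cats0 run_fX Ht foldl_cat run_kills mem_enum.
  by rewrite !inE eqxx /= -[_ == Some i0]/(_ \in FF) acc_a.
- by rewrite !runNone inE.
rewrite run_fX; case: ifP => Hr; last by rewrite !runNone inE.
rewrite !foldl_cat run_kills mem_enum !inE.
by case: (eqVneq r t) => [<-|_] //=; rewrite !runNone.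
Qed.

End FW.

Lemma sets_dist_in (S : finType) (L : lang S) (T : finType) (A : {set {set T}})
  (f : {set T} -> seq S) (yt : T -> seq S)
  (Hy : forall X t, X \in A -> (quot L (f X) (yt t) <-> t \in X)) :
  forall X Y, X \in A -> Y \in A -> X <> Y -> ~ lang_eq (quot L (f X)) (quot L (f Y)).
Proof.
move=> X Y HX HY HXY Heq; apply: HXY; apply/setP => t.
apply/idP/idP => H.
  by apply/(Hy _ _ HY); apply/Heq; apply/(Hy _ _ HX).
by apply/(Hy _ _ HX); apply/Heq; apply/(Hy _ _ HY).
Qed.

Section SW.
Variables (S : finType) (a b : S) (ab : a != b) (n : nat) (n0 : 0 < n) (n1 : 1 < n).
Local Notation rot := (rotk n0).
Definition j0 : 'I_n := Ordinal n0.
Definition dN (i : 'I_n) (c : S) : 'I_n :=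
  if c == b then (if val i == 0 then rot 1 i else i) else rot 1 i.
Definition FN : pred 'I_n := [pred s | s == j0].
Definition LN := LD dN j0 FN.

Lemma run_aN k i : foldl dN i (nseq k a) = rot k i.
Proof.
elim: k i => [|k IH] i /=; first by rewrite rotk0.
by rewrite /dN (negbTE ab) IH rotkS.
Qed.

Lemma reachN (q : 'I_n) : foldl dN j0 (nseq q a) = q.
Proof. by rewrite run_aN; apply/val_inj; rewrite /= add0n modn_small. Qed.

Lemma accN (i s : 'I_n) : (foldl dN s (nseq (n - i) a) \in FN) = (s == i).
Proof.
rewrite run_aN inE -(rot_zero n0 s i); apply/eqP/eqP => [->//|E].
by apply/val_inj; rewrite E.
Qed.

Lemma kappa_LN : has_kappa LN n.
Proof.
suff : has_kappa LN #|'I_n| by rewrite card_ord.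
apply: (@dfa_kappa _ _ dN j0 FN LN (fun w => iff_refl _) (fun q => nseq q a) reachN).
apply: (dist_sig (sp := j0)) => q _; exists (nseq (n - q) a) => s.
exact: accN.
Qed.

Lemma LN_nonempty : ~ has_empty LN.
Proof.
move=> [w Hw]; apply: (Hw (nseq (n - foldl dN j0 w) a)).
by rewrite /quot /LN /LD foldl_cat accN.
Qed.

Definition vN (s : 'I_n) : seq S := nseq (n - s) a ++ b :: nseq s a.

Lemma run_vN r s : foldl dN r (vN s) = if r == s then rot 1 s else r.
Proof.
rewrite /vN foldl_cat run_aN /= /dN eqxx (rot_zero n0).
case: eqP => [->|_]; rewrite run_aN; last by rewrite (rot_back n0).
apply/val_inj => /=; rewrite !modnDml -addnA modnDml.
have Hs := ltn_ord s.
have -> : s + (n - s) + (1 + s) = (s + 1) + n.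
  by move: Hs => /ltP ?; rewrite -!plusE -minusE; lia.
by rewrite modnDr.
Qed.

Definition imgN w := [set foldl dN s w | s in [set: 'I_n]].

Lemma imgN_cat w u : imgN (w ++ u) = [set foldl dN s u | s in imgN w].
Proof.
rewrite /imgN -imset_comp; apply: eq_imset => s /=; exact: foldl_cat.
Qed.

Lemma img_step (X : {set 'I_n}) s : s \notin X -> rot 1 s \in X ->
  [set foldl dN r (vN s) | r in s |: X] = X.
Proof.
move=> Hs H1; apply/setP => y; apply/imsetP/idP => [[r Hr ->]|Hy].
  rewrite run_vN; case: eqP => // Ers; move: Hr; rewrite !inE.
  by case/orP => // /eqP E; case: Ers.
exists y; first by rewrite !inE Hy orbT.
rewrite run_vN; case: eqP => // E; move: Hs; by rewrite -E Hy.
Qed.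

Lemma boundary (X : {set 'I_n}) : X != set0 -> X != setT ->
  exists s, (s \notin X) && (rot 1 s \in X).
Proof.
move=> X0 XT; apply: NNPP => Hn.
have Hc : forall s, s \notin X -> rot 1 s \notin X.
  move=> s Hs; apply/negP => H1; apply: Hn; exists s; by rewrite Hs H1.
have [s0 Hs0] : exists s0, s0 \notin X.
  apply: NNPP => H; move/negP: XT; apply; apply/eqP/setP => y; rewrite inE.
  by apply: NNPP => Hy; apply: H; exists y; apply/negP => E; apply: Hy; rewrite E.
have Hk : forall k, rot k s0 \notin X.
  elim=> [|k IH]; first by rewrite rotk0.
  by rewrite -rotkS'; exact: Hc _ IH.
case/set0Pn: X0 => y Hy.
have := Hk (y + (n - s0)); rewrite (_ : rot _ s0 = y) ?Hy //.
apply/val_inj => /=; have Hs := ltn_ord s0.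
have -> : s0 + (y + (n - s0)) = y + n by move: Hs => /ltP ?; rewrite -!plusE -minusE; lia.
by rewrite modnDr modn_small.
Qed.

Lemma img_exists k (X : {set 'I_n}) : #|~: X| <= k -> X != set0 -> exists w, imgN w = X.
Proof.
elim: k X => [|k IH] X Hk X0.
  exists [::]; rewrite /imgN.
  have -> : X = setT by apply/setP => y; move: Hk; rewrite leqn0 cards_eq0 => /eqP /setP /(_ y);
    rewrite !inE; case: (y \in X).
  by apply/setP => y; rewrite inE; apply/imsetP; exists y.
case: (eqVneq X setT) => [->|XT]; first by exists [::]; apply/setP => y; rewrite inE;
  apply/imsetP; exists y.
have [s /andP [Hs H1]] := boundary X0 XT.
have [w Hw] : exists w, imgN w = s |: X.
  apply: IH; last by apply/set0Pn; exists s; rewrite setU11.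
  rewrite setCU; move: Hk; rewrite (cardsD1 s (~: X)) inE Hs add1n ltnS.
  apply: leq_trans; apply: subset_leq_card; apply/subsetP => y; rewrite !inE.
  by case/andP => -> ->.
by exists (w ++ vN s); rewrite imgN_cat Hw img_step.
Qed.

Lemma sc_LN w y : quot (suffix_closure LN) w y <-> exists2 s, s \in imgN w & foldl dN s y \in FN.
Proof.
rewrite (@sc_dfa _ _ dN j0 FN (fun q => nseq q a) reachN); split => [[s Hs]|[s]].
  by exists (foldl dN s w) => //; apply/imsetP; exists s.
by case/imsetP => r _ -> H; exists r.
Qed.

End SW.

Section SubW.
Variables (S : finType) (k : nat) (k0 : 0 < k) (c : 'I_k -> S) (cinj : injective c).
Definition l0 : 'I_k := Ordinal k0.

Definition idx (x : S) : option 'I_k := [pick i | c i == x].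

Lemma idx_c i : idx (c i) = Some i.
Proof.
rewrite /idx; case: pickP => [j /eqP /cinj -> //|H].
by move: (H i); rewrite eqxx.
Qed.

Definition dW (s : option (option 'I_k)) (x : S) : option (option 'I_k) :=
  match s with
  | Some None => if idx x is Some i then Some (Some i) else None
  | Some (Some i) => if idx x is Some j then (if j == i then None else Some (Some i)) else None
  | None => None
  end.
Definition FW : pred (option (option 'I_k)) := [pred s | s != None].
Definition LW := LD dW (Some None) FW.
Definition good (i : 'I_k) (x : S) : bool := if idx x is Some j then j != i else false.

Lemma runW_none w : foldl dW None w = None.
Proof. by elim: w. Qed.

Lemma run_p i z : foldl dW (Some (Some i)) z = if all (good i) z then Some (Some i) else None.
Proof.
elim: z => [|x z IH] //=; rewrite /good; case: (idx x) => [j|] /=; last by rewrite runW_none.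
by case: (j == i) => /=; rewrite ?runW_none.
Qed.

Lemma good_c i j : good i (c j) = (j != i).
Proof. by rewrite /good idx_c. Qed.

Lemma count_good i z : all (good i) z -> count_mem (c i) z = 0.
Proof.
elim: z => [|x z IH] //= /andP [Hx Hz]; rewrite IH //.
by case: eqP Hx => // ->; rewrite good_c eqxx.
Qed.

Lemma no_swc s : (forall i, 1 < count_mem (c i) s) -> ~ subword_closure LW s.
Proof.
move=> Hc [z [Hz Hs]].
have Hcz : forall x, count_mem x s <= count_mem x z.
  by apply/count_subseqP; exists s.
case: z Hz Hs Hcz => [|x z] Hz Hs Hcz.
  by have := Hcz (c l0); have := Hc l0; case: (count_mem (c l0) s) => [|[|]].
move: Hz; rewrite /LW /LD /= inE /=.
case E: (idx x) => [i|]; last by rewrite runW_none.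
rewrite run_p; case: ifP => // Hg _.
have H1 := Hc i; have H2 := Hcz (c i); rewrite /= (count_good Hg) in H2.
by have := leq_trans H1 H2; case: (x == c i).
Qed.

Lemma yes_swc i z : all (good i) z -> subword_closure LW (c i :: z).
Proof.
move=> Hg; exists (c i :: z); split; last exact: subseq_refl.
by rewrite /LW /LD /= idx_c run_p Hg.
Qed.

Definition dbl (l : seq 'I_k) : seq S := flatten [seq [:: c j; c j] | j <- l].

Lemma count_dbl i l : i \in l -> 1 < count_mem (c i) (dbl l).
Proof.
elim: l => [|j l IH] //; rewrite inE /dbl /= => /orP [/eqP ->|H].
  by rewrite eqxx.
have := IH H; rewrite /dbl => H2; apply: leq_trans H2 _.
by rewrite addnA leq_addl.
Qed.

Lemma good_dbl i l : i \notin l -> all (good i) (dbl l).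
Proof.
elim: l => [|j l IH] //; rewrite inE negb_or /dbl /= => /andP [Hj H].
by rewrite !good_c eq_sym Hj; exact: IH.
Qed.

Definition wW (p : option {set 'I_k}) : seq S :=
  if p is Some X then c l0 :: dbl (enum (~: X)) else [::].

Lemma distXY (X Y : {set 'I_k}) (t : 'I_k) : t \in X -> t \notin Y ->
  ~ lang_eq (quot (subword_closure LW) (wW (Some X))) (quot (subword_closure LW) (wW (Some Y))).
Proof.
move=> HX HY Heq.
pose y := dbl (enum [set~ t]).
have gy : all (good t) y by apply: good_dbl; rewrite mem_enum !inE eqxx.
suff [H1 H2] : quot (subword_closure LW) (wW (Some X)) y /\ ~ quot (subword_closure LW) (wW (Some Y)) y.
  by apply: H2; apply/Heq.
split.
  have gX : all (good t) (dbl (enum (~: X))) by apply: good_dbl; rewrite mem_enum !inE HX.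
  rewrite /quot /=; case: (eqVneq t l0) => [Et|Nt].
    have := @yes_swc t (dbl (enum (~: X)) ++ y); rewrite all_cat gX gy Et; exact.
  have Hg2 : all (good t) (c l0 :: dbl (enum (~: X)) ++ y).
    by rewrite /= good_c eq_sym Nt all_cat gX gy.
  have [z [Hz Hs]] := yes_swc Hg2.
  exists z; split => //; apply: subseq_trans Hs; exact: subseq_cons.
apply: no_swc => i; rewrite /= count_cat; case: (eqVneq i t) => [->|Ni].
  apply: (leq_trans _ (leq_addl _ _)); apply: (leq_trans _ (leq_addr _ _)).
  by apply: count_dbl; rewrite mem_enum inE.
apply: (leq_trans _ (leq_addl _ _)); apply: (leq_trans _ (leq_addl _ _)).
by apply: count_dbl; rewrite mem_enum !inE.
Qed.

Lemma distNX X :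
  ~ lang_eq (quot (subword_closure LW) (wW None)) (quot (subword_closure LW) (wW (Some X))).
Proof.
move=> Heq.
pose y := c l0 :: dbl (enum [set~ l0]).
have gy : all (good l0) (dbl (enum [set~ l0])) by apply: good_dbl; rewrite mem_enum !inE eqxx.
have H1 : quot (subword_closure LW) (wW None) y by exact: yes_swc.
move/Heq: H1; apply: no_swc => i; rewrite /= count_cat /=.
case: (eqVneq i l0) => [->|Ni].
  by rewrite eqxx add1n ltnS addnCA add1n.
apply: (leq_trans _ (leq_addl _ _)); apply: (leq_trans _ (leq_addl _ _)).
apply: (leq_trans _ (leq_addl _ _)).
by apply: count_dbl; rewrite mem_enum !inE.
Qed.

Definition fWr (q : option (option 'I_k)) : seq S :=
  match q with None => [:: c l0; c l0] | Some None => [::] | Some (Some i) => [:: c i] end.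

Lemma reachW q : foldl dW (Some None) (fWr q) = q.
Proof. by case: q => [[i|]|] //=; rewrite !idx_c //= idx_c eqxx. Qed.

Lemma kappa_LW : has_kappa LW k.+2.
Proof.
suff : has_kappa LW #|{: option (option 'I_k)}| by rewrite !card_option card_ord.
apply: (@dfa_kappa _ _ dW (Some None) FW LW (fun w => iff_refl _) fWr reachW).
case=> [[i|]|] [[j|]|] // Hpq.
- exists [:: c i]; rewrite /= !idx_c eqxx; case: (eqVneq i j) => [E|N].
    by exfalso; apply: Hpq; rewrite E.
  by rewrite !inE.
- by exists [:: c i]; rewrite /= !idx_c eqxx.
- by exists [::].
- by exists [:: c j]; rewrite /= !idx_c eqxx.
- by exists [::].
- by exists [::].
- by exists [::].
Qed.

End SubW.

Section PW.
Variables (S : finType) (a : S) (k : nat).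
Definition dP (i : 'I_k.+2) (x : S) : 'I_k.+2 := inord (minn i.+1 k.+1).
Definition FP : pred 'I_k.+2 := [pred i : 'I_k.+2 | i <= k].
Definition Lk : lang S := fun w => size w <= k.

Lemma minn_step x : minn (minn x k.+1).+1 k.+1 = minn x.+1 k.+1.
Proof.
case: (leqP x k.+1) => h //.
have -> : minn k.+2 k.+1 = k.+1 by apply/minn_idPr.
by apply/esym/minn_idPr; apply: leq_trans (ltnW h) (leqnSn _).
Qed.

Lemma dP_val (i : 'I_k.+2) x : val (dP i x) = minn i.+1 k.+1.
Proof. by rewrite /dP /= inordK // ltnS geq_minr. Qed.

Lemma runP (p : 'I_k.+2) y : val (foldl dP p y) = minn (p + size y) k.+1.
Proof.
elim/last_ind: y => [|y x IH].
  by rewrite addn0 /=; apply/esym/minn_idPl; rewrite -ltnS.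
by rewrite foldl_rcons dP_val IH size_rcons addnS minn_step.
Qed.

Lemma accP (p : 'I_k.+2) y : (foldl dP p y \in FP) = (p + size y <= k).
Proof.
rewrite inE /= runP geq_min.
by case: (p + size y <= k) => //=; rewrite ltnn.
Qed.

Lemma LkE w : Lk w <-> foldl dP ord0 w \in FP.
Proof. by rewrite accP. Qed.

Lemma kappa_Lk : has_kappa Lk k.+2.
Proof.
suff : has_kappa Lk #|'I_k.+2| by rewrite card_ord.
have reach : forall q : 'I_k.+2, foldl dP ord0 (nseq q a) = q.
  by move=> q; apply/val_inj; rewrite runP size_nseq add0n; apply/minn_idPl; rewrite -ltnS.
apply: (@dfa_kappa _ _ dP ord0 FP Lk LkE (fun q => nseq q a) reach).
have key : forall p q : 'I_k.+2, p < q ->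
    (foldl dP p (nseq (k - p) a) \in FP) != (foldl dP q (nseq (k - p) a) \in FP).
  move=> p q pq; rewrite !accP size_nseq.
  have Hq := ltn_ord q.
  have -> : p + (k - p) <= k = true.
    by apply/leP; move: pq Hq => /ltP ? /ltP ?; rewrite -minusE -plusE; lia.
  have -> : q + (k - p) <= k = false.
    by apply/negbTE/negP => /leP; move: pq Hq => /ltP ? /ltP ?; rewrite -minusE -plusE; lia.
  by [].
move=> p q Hpq; case: (ltngtP p q) => [lt|gt|eq].
- by exists (nseq (k - p) a); exact: key.
- by exists (nseq (k - q) a); rewrite eq_sym; exact: key.
- by exfalso; apply: Hpq; apply/val_inj.
Qed.

Lemma regular_Lk : regular Lk.
Proof. by exists 'I_k.+2, dP, ord0, FP; exact: LkE. Qed.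

Lemma pc_Lk x : prefix_closure Lk x <-> Lk x.
Proof.
rewrite pc_char /Lk; split => [[u]|H]; last by exists [::]; rewrite cats0.
by rewrite size_cat; apply: leq_trans (leq_addr _ _).
Qed.

Lemma swc_Lk x : subword_closure Lk x <-> Lk x.
Proof.
rewrite swc_char /Lk; split => [[z [Hz Hs]]|H]; last by exists x; split => //; exact: subseq_refl.
exact: leq_trans (size_subseq Hs) Hz.
Qed.
End PW.


Lemma two_letters (S : finType) : 1 < #|S| -> exists a b : S, a != b.
Proof. by move/card_gt1P => [a [b [_ _ ab]]]; exists a, b. Qed.

Lemma card_sets (T : finType) : #|[set: {set T}]| = 2 ^ #|T|.
Proof. by rewrite -powersetT card_powerset cardsT. Qed.

Lemma card_ne (T : finType) : #|[set: {set T}] :\ set0| = 2 ^ #|T| - 1.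
Proof. by have := cardsD1 set0 [set: {set T}]; rewrite card_sets in_setT add1n => ->; rewrite subn1. Qed.

Lemma iff_sym' (S : finType) (L1 L2 : lang S) : (forall x, L1 x <-> L2 x) -> forall x, L2 x <-> L1 x.
Proof. by move=> H x; split => /H. Qed.

Lemma tight_prefix (S : finType) n : 2 <= n -> 1 < #|S| ->
  exists L : lang S, [/\ regular L, has_kappa L n & has_kappa (prefix_closure L) n].
Proof.
move=> n2 /two_letters [a [b ab]].
have [k ->] : exists k, n = k.+2 by exists (n - 2); rewrite -addn2 subnK.
exists (Lk k); split; [exact: regular_Lk | exact: kappa_Lk a k |].
by apply: (has_kappa_ext (iff_sym' (@pc_Lk S k))); exact: kappa_Lk a k.
Qed.

Lemma tight_suffix_ne (S : finType) n : 2 <= n -> 1 < #|S| ->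
  exists L : lang S, [/\ regular L, has_kappa L n, ~ has_empty L
                       & has_kappa (suffix_closure L) (2 ^ n - 1)].
Proof.
move=> n2 /two_letters [a [b ab]].
have n0 : 0 < n by apply: leq_trans n2.
have HK := kappa_LN ab n0.
exists (LN b n0); split => //; first exact: regular_LD.
  exact: (LN_nonempty ab).
have [m Hm Hle] := UB_suffix_ne HK.
apply (kappa_exact Hm) => //.
pose fw (X : {set 'I_n}) : seq S :=
  match excluded_middle_informative (exists w, imgN b n0 w = X) with
  | left H => proj1_sig (constructive_indefinite_description _ H)
  | right _ => [::] end.
have Hfw : forall X, X != set0 -> imgN b n0 (fw X) = X.
  move=> X X0; rewrite /fw; case: excluded_middle_informative => [H|H].
    by case: (constructive_indefinite_description _ H).
  by exfalso; apply: H; exact: (img_exists ab n0 (leqnn _) X0).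
rewrite -(card_ord n) -card_ne.
apply: (kappa_ge (f := fw) Hm).
apply: (sets_dist_in (yt := fun t : 'I_n => nseq (n - t) a)) => X t.
rewrite !inE andbT => X0; rewrite (sc_LN ab n0) Hfw //.
split => [[s Hs]|Ht]; first by rewrite (accN ab) => /eqP <-.
by exists t => //; rewrite (accN ab).
Qed.

Lemma tight_suffix_e (S : finType) n : 2 <= n -> 1 < #|S| ->
  exists L : lang S, [/\ regular L, has_kappa L n, has_empty L
                       & has_kappa (suffix_closure L) (2 ^ n.-1)].
Proof.
move=> n2 /two_letters [a [b ab]].
have [m En] : exists m, n = m.+1 by exists n.-1; rewrite prednK // ltnW.
subst n.
have m0 : 0 < m by rewrite -ltnS.
have HK := kappa_LF ab m0.
exists (LF b m0); split => //; first exact: regular_LD.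
  exact: LF_empty.
have [m' Hm Hle] := UB_suffix_e HK (LF_empty b m0).
apply (kappa_exact Hm) => //.
rewrite /= -(card_ord m) -card_sets.
apply: (kappa_ge (f := fun X : {set 'I_m} => fX a b X) Hm) => X Y _ _.
apply: (sets_dist (yt := fun t : 'I_m => nseq (m - t) a)) => X0 t.
exact: (sc_LF ab m0).
Qed.

Lemma tight_factor (S : finType) n : 2 <= n -> 1 < #|S| ->
  exists L : lang S, [/\ regular L, has_kappa L n
                       & has_kappa (factor_closure L) (2 ^ n.-1)].
Proof.
move=> n2 /two_letters [a [b ab]].
have [m En] : exists m, n = m.+1 by exists n.-1; rewrite prednK // ltnW.
subst n.
have m0 : 0 < m by rewrite -ltnS.
have HK := kappa_LF ab m0.
exists (LF b m0); split => //; first exact: regular_LD.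
have [m' Hm Hle] := UB_factor (ltn0Sn _) HK.
apply (kappa_exact Hm) => //.
rewrite /= -(card_ord m) -card_sets.
apply: (kappa_ge (f := fun X : {set 'I_m} => fX a b X) Hm) => X Y _ _.
apply: (sets_dist (yt := fun t : 'I_m => kills a b (enum [set~ t]) ++ nseq (m - t) a)) => X0 t.
exact: (fc_LF ab m0).
Qed.

Lemma tight_subword (S : finType) n : 2 <= n -> maxn (n - 2) 2 <= #|S| ->
  exists L : lang S, [/\ regular L, has_kappa L n
                       & has_kappa (subword_closure L) (2 ^ (n - 2) + 1)].
Proof.
rewrite geq_max => n2 /andP [HnS HS]; have [a [b ab]] := two_letters HS.
have [k En] : exists k, n = k.+2 by exists (n - 2); rewrite -addn2 subnK.
subst n; rewrite subn2 /= in HnS *.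
clear n2; case: k HnS => [|k] HnS.
  exists (Lk 0); split; [exact: regular_Lk | exact: kappa_Lk a 0 |].
  by apply: (has_kappa_ext (iff_sym' (@swc_Lk S 0))); exact: kappa_Lk a 0.
have k0 : 0 < k.+1 by [].
pose c (i : 'I_k.+1) : S := nth a (enum S) i.
have cinj : injective c.
  move=> i j /eqP; rewrite /c nth_uniq ?enum_uniq -?cardE.
  - by move/eqP/val_inj.
  - exact: leq_trans (ltn_ord i) HnS.
  - exact: leq_trans (ltn_ord j) HnS.
  - by [].
have HK := kappa_LW k0 cinj.
exists (LW c); split => //; first exact: regular_LD.
have [m Hm Hle] := UB_subword (isT : 1 < k.+3) HK.
rewrite subn2 /= in Hle.
apply (kappa_exact Hm) => //.
have -> : 2 ^ k.+1 + 1 = #|[set: option {set 'I_k.+1}]|.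
  by rewrite cardsT card_option -cardsT card_sets card_ord addn1.
apply: (kappa_ge (f := wW k0 c) Hm) => p q _ _.
case: p q => [X|] [Y|] // Hpq.
- have [t Ht] : exists t, (t \in X) != (t \in Y).
    apply: NNPP => Hn; apply: Hpq; congr Some; apply/setP => t.
    by apply: NNPP => Ht; apply: Hn; exists t; apply/eqP.
  case HX: (t \in X) Ht => /= Ht.
    by apply: (distXY cinj HX); rewrite Ht.
  move=> H; apply: (distXY cinj (t := t)) (leq_sym' H) => //; first by move: Ht; case: (t \in Y).
  by rewrite HX.
- by move=> H; apply: (distNX cinj (X := X)); exact: leq_sym' H.
- exact: (@distNX S k.+1 k0 c cinj Y).
Qed.

Theorem theorem1 :
  (* upper bounds *)
  (forall (S : finType) (L : lang S) (n : nat),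
     0 < #|S| -> 2 <= n -> regular L -> has_kappa L n ->
     [/\ (exists2 m, has_kappa (prefix_closure L) m & m <= n),
         (~ has_empty L ->
            exists2 m, has_kappa (suffix_closure L) m & m <= 2 ^ n - 1),
         (has_empty L ->
            exists2 m, has_kappa (suffix_closure L) m & m <= 2 ^ n.-1),
         (exists2 m, has_kappa (factor_closure L) m & m <= 2 ^ n.-1)
       & (exists2 m, has_kappa (subword_closure L) m & m <= 2 ^ (n - 2) + 1)])
  /\
  (* tightness for prefix, suffix, factor closures *)
  (forall (S : finType) (n : nat), 2 <= n -> 2 <= #|S| ->
     [/\ (exists L : lang S, [/\ regular L, has_kappa L n
                               & has_kappa (prefix_closure L) n]),
         (exists L : lang S, [/\ regular L, has_kappa L n, ~ has_empty L
                               & has_kappa (suffix_closure L) (2 ^ n - 1)]),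
         (exists L : lang S, [/\ regular L, has_kappa L n, has_empty L
                               & has_kappa (suffix_closure L) (2 ^ n.-1)])
       & (exists L : lang S, [/\ regular L, has_kappa L n
                               & has_kappa (factor_closure L) (2 ^ n.-1)])])
  /\
  (* tightness for subword closure *)
  (forall (S : finType) (n : nat), 2 <= n -> maxn (n - 2) 2 <= #|S| ->
     exists L : lang S, [/\ regular L, has_kappa L n
                          & has_kappa (subword_closure L) (2 ^ (n - 2) + 1)]).
Proof.
split; [|split].
- move=> S L n _ n2 _ HK; split.
  + exact: UB_prefix HK.
  + by move=> _; exact: UB_suffix_ne HK.
  + exact: UB_suffix_e HK.
  + exact: UB_factor (leq_trans _ n2) HK.
  + exact: UB_subword n2 HK.
- move=> S n n2 HS; split.
  + exact: tight_prefix.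
  + exact: tight_suffix_ne.
  + exact: tight_suffix_e.
  + exact: tight_factor.
- exact: tight_subword.
Qed.
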